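(* Let $\mathfrak g$ be a $3$-Lie algebra over a field $\mathbb k$ and $(X,\Delta,T)$ its associated TSD object. Define $\Lambda^2(\phi)((a,x)\otimes(b,y)\otimes(c,z))=(0,\phi(x,y,z))$ for $3$-Lie $2$-cochains $\phi$. Then $\Lambda^2$ maps $3$-Lie $2$-cocycles to TSD $2$-cocycles and $3$-Lie $2$-coboundaries to TSD $2$-coboundaries, hence induces a homomorphism $H^2_{3\rm Lie}(\mathfrak g;\mathfrak g)\to H^2_{\rm TSD}(X;X)$.
   Context: A $3$-Lie algebra (Filippov) is a vector space $\mathfrak g$ with an alternating trilinear bracket $[\cdot,\cdot,\cdot]$ satisfying $[[x,y,z],w,u]=[[x,w,u],y,z]+[x,[y,w,u],z]+[x,y,[z,w,u]]$. Associated TSD object: $X=\mathbb k\oplus\mathfrak g$, $\Delta(a,x)=(a,x)\otimes(1,0)+(1,0)\otimes(0,x)$, $\Delta_3=(\Delta\otimes\mathbb 1)\Delta$ (Sweedler $w^{(1)}\otimes w^{(2)}\otimes w^{(3)}$), $T((a,x)\otimes(b,y)\otimes(c,z))=(abc,\ bcx+[x,y,z])$. $3$-Lie cohomology: $2$-cochains are alternating trilinear $\phi\colon\mathfrak g^3\to\mathfrak g$; $\delta^2\phi(x,y,z,w,u)=[\phi(x,y,z),w,u]+\phi([x,y,z],w,u)-[\phi(x,w,u),y,z]-[x,\phi(y,w,u),z]-[x,y,\phi(z,w,u)]-\phi([x,w,u],y,z)-\phi(x,[y,w,u],z)-\phi(x,y,[z,w,u])$; for linear $f\colon\mathfrak g\to\mathfrak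 g$, $\delta^1f(x,y,z)=f([x,y,z])-[f(x),y,z]-[x,f(y),z]-[x,y,f(z)]$; $H^2_{3\rm Lie}=\ker\delta^2/\operatorname{im}\delta^1$. TSD cohomology: with $\sigma$ sending $u_1\otimes\cdots\otimes u_9$ to $u_1\otimes u_4\otimes u_7\otimes u_2\otimes u_5\otimes u_8\otimes u_3\otimes u_6\otimes u_9$: $C^1_{\rm TSD}$ = linear $f$ with $\Delta_3 f=(f\otimes\mathbb 1\otimes\mathbb 1+\mathbb 1\otimes f\otimes\mathbb 1+\mathbb 1\otimes\mathbb 1\otimes f)\Delta_3$; $C^2_{\rm TSD}$ = linear $\psi$ with $\Delta_3\psi=(\psi\otimes T\otimes T+T\otimes\psi\otimes T+T\otimes T\otimes\psi)\sigma\Delta_3^{\otimes3}$; $\delta^1 f(x\otimes y\otimes z)=f(T(x\otimes y\otimes z))-T(f(x)\otimes y\otimes z)-T(x\otimes f(y)\otimes z)-T(x\otimes y\otimes f(z))$; $\delta^2\psi(x\otimes y\otimes z\otimes w\otimes u)=T(\psi(x\otimes y\otimes z)\otimes w\otimes u)+\psi(T(x\otimes y\otimes z)\otimes w\otimes u)-\psi(A_1\otimes A_2\otimes A_3)-T(\Psi_1\otimes A_2\otimes A_3)-T(A_1\otimes\Psi_2\otimes A_3)-T(A_1\otimes A_2\otimes\Psi_3)$, $A_i=T(x_i\otimes w^{(i)}\otimes u^{(i)})$, $(x_1,x_2,x_3)=(x,y,z)$, $\Psi_i$ likewise with $\psi$; $H^2_{\rm TSD}=(C^2\cap\ker\delta^2)/\delta^1(C^1)$.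 *)

(* Defs.v *)
From mathcomp Require Import all_boot all_algebra.
Set Implicit Arguments. Unset Strict Implicit. Unset Printing Implicit Defensive.
Import GRing.Theory.
Local Open Scope ring_scope.

(* Linear maps out of a tensor power X^{(x)3} are represented (universal     *)
(* property) by trilinear maps X -> X -> X -> V.  Elements of X^{(x)3} are   *)
(* represented as formal finite sums of pure tensors (seq (X * X * X)); two  *)
(* such sums are equal in X^{(x)3} iff every trilinear map agrees on them.   *)

Section Defs.
Variable k : fieldType.

Definition trilinear (U V : lmodType k) (f : U -> U -> U -> V) : Prop :=
  (forall y z, linear (fun x => f x y z)) /\
  (forall x z, linear (fun y => f x y z)) /\
  (forall x y, linear (fun z => f x y z)).

Definition alternating (U V : lmodType k) (f : U -> U -> U -> V) : Prop :=
  forall x y, f x x y = 0 /\ f x y x = 0 /\ f y x x = 0.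

Variable g : lmodType k.

Definition is_3Lie (br : g -> g -> g -> g) : Prop :=
  [/\ trilinear br, alternating br &
      forall x y z w u,
        br (br x y z) w u =
        br (br x w u) y z + br x (br y w u) z + br x y (br z w u)].

Section Cohom3Lie.
Variable br : g -> g -> g -> g.

Definition LieC2 (phi : g -> g -> g -> g) : Prop :=
  trilinear phi /\ alternating phi.

Definition Lie_delta2 (phi : g -> g -> g -> g) (x y z w u : g) : g :=
  br (phi x y z) w u + phi (br x y z) w u
  - br (phi x w u) y z - br x (phi y w u) z - br x y (phi z w u)
  - phi (br x w u) y z - phi x (br y w u) z - phi x y (br z w u).

Definition Lie_delta1 (f : g -> g) (x y z : g) : g :=
  f (br x y z) - br (f x) y z - br x (f y) z - br x y (f z).

Definition X : lmodType k := (k^o * g)%type.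

Definition unitX : X := ((1 : k^o), (0 : g)).
Definition inj (x : g) : X := ((0 : k^o), x).

Definition Delta (w : X) : seq (X * X) := [:: (w, unitX); (unitX, inj w.2)].

(* Delta_3 = (Delta (x) 1) Delta *)
Definition Delta3 (w : X) : seq (X * X * X) :=
  flatten [seq [seq (p.1, p.2, q.2) | p <- Delta q.1] | q <- Delta w].

Definition T (u v w : X) : X :=
  (((u.1 : k) * (v.1 : k) * (w.1 : k) : k^o),
   ((v.1 : k) * (w.1 : k)) *: u.2 + br u.2 v.2 w.2).

Definition teval (V : lmodType k) (beta : X -> X -> X -> V)
  (s : seq (X * X * X)) : V := \sum_(t <- s) beta t.1.1 t.1.2 t.2.

Definition teq (s t : seq (X * X * X)) : Prop :=
  forall (V : lmodType k) (beta : X -> X -> X -> V),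
    trilinear beta -> teval beta s = teval beta t.

Definition TSD_C1 (f : X -> X) : Prop :=
  linear f /\
  forall w : X,
    teq (Delta3 (f w))
        (flatten [seq [:: (f p.1.1, p.1.2, p.2); (p.1.1, f p.1.2, p.2);
                         (p.1.1, p.1.2, f p.2)] | p <- Delta3 w]).

Definition TSD_C2 (psi : X -> X -> X -> X) : Prop :=
  trilinear psi /\
  forall x y z : X,
    teq (Delta3 (psi x y z))
        (flatten [seq
          flatten [seq
            flatten [seq
              [:: (psi p.1.1 q.1.1 r.1.1, T p.1.2 q.1.2 r.1.2, T p.2 q.2 r.2);
                  (T p.1.1 q.1.1 r.1.1, psi p.1.2 q.1.2 r.1.2, T p.2 q.2 r.2);
                  (T p.1.1 q.1.1 r.1.1, T p.1.2 q.1.2 r.1.2, psi p.2 q.2 r.2)]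
            | r <- Delta3 z]
          | q <- Delta3 y]
        | p <- Delta3 x]).

Definition TSD_delta1 (f : X -> X) (x y z : X) : X :=
  f (T x y z) - T (f x) y z - T x (f y) z - T x y (f z).

Definition TSD_delta2 (psi : X -> X -> X -> X) (x y z w u : X) : X :=
  T (psi x y z) w u + psi (T x y z) w u
  - \sum_(p <- Delta3 w) \sum_(q <- Delta3 u)
      (psi (T x p.1.1 q.1.1) (T y p.1.2 q.1.2) (T z p.2 q.2)
       + T (psi x p.1.1 q.1.1) (T y p.1.2 q.1.2) (T z p.2 q.2)
       + T (T x p.1.1 q.1.1) (psi y p.1.2 q.1.2) (T z p.2 q.2)
       + T (T x p.1.1 q.1.1) (T y p.1.2 q.1.2) (psi z p.2 q.2)).

Definition Lambda2 (phi : g -> g -> g -> g) (u v w : X) : X :=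
  inj (phi u.2 v.2 w.2).

End Cohom3Lie.
End Defs.

(* Main.v *)
Require Import Defs.
From mathcomp Require Import all_boot all_algebra.
Import GRing.Theory.
Local Open Scope ring_scope.
Set Implicit Arguments. Unset Strict Implicit.

Section Aux.
Variable k : fieldType.

Lemma lin0 (U V : lmodType k) (f : U -> V) : linear f -> f 0 = 0.
Proof.
move=> H; have := H 1 0 0; rewrite scaler0 addr0 scale1r => e.
by apply: (@addrI _ (f 0)); rewrite addr0 -e.
Qed.

Lemma linD (U V : lmodType k) (f : U -> V) u v : linear f -> f (u + v) = f u + f v.
Proof. by move=> H; have := H 1 u v; rewrite !scale1r. Qed.

Lemma linZ (U V : lmodType k) (f : U -> V) a u : linear f -> f (a *: u) = a *: f u.
Proof. by move=> H; have := H a u 0; rewrite !addr0 (lin0 H) addr0. Qed.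

Lemma linN (U V : lmodType k) (f : U -> V) u : linear f -> f (- u) = - f u.
Proof. by move=> H; rewrite -scaleN1r (linZ _ _ H) scaleN1r. Qed.

Section Tri.
Variables (U V : lmodType k) (t : U -> U -> U -> V) (Ht : trilinear t).
Lemma t0_1 y z : t 0 y z = 0. Proof. case: Ht => [H _]; exact: (lin0 (H y z)). Qed.
Lemma t0_2 x z : t x 0 z = 0. Proof. case: Ht => [_ [H _]]; exact: (lin0 (H x z)). Qed.
Lemma t0_3 x y : t x y 0 = 0. Proof. case: Ht => [_ [_ H]]; exact: (lin0 (H x y)). Qed.
Lemma tD1 u v y z : t (u + v) y z = t u y z + t v y z.
Proof. case: Ht => [H _]; exact: (linD _ _ (H y z)). Qed.
Lemma tD2 x u v z : t x (u + v) z = t x u z + t x v z.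
Proof. case: Ht => [_ [H _]]; exact: (linD _ _ (H x z)). Qed.
Lemma tD3 x y u v : t x y (u + v) = t x y u + t x y v.
Proof. case: Ht => [_ [_ H]]; exact: (linD _ _ (H x y)). Qed.
Lemma tZ1 a u y z : t (a *: u) y z = a *: t u y z.
Proof. case: Ht => [H _]; exact: (linZ _ _ (H y z)). Qed.
Lemma tZ2 a x u z : t x (a *: u) z = a *: t x u z.
Proof. case: Ht => [_ [H _]]; exact: (linZ _ _ (H x z)). Qed.
Lemma tZ3 a x y u : t x y (a *: u) = a *: t x y u.
Proof. case: Ht => [_ [_ H]]; exact: (linZ _ _ (H x y)). Qed.
Lemma tN1 u y z : t (- u) y z = - t u y z.
Proof. case: Ht => [H _]; exact: (linN _ (H y z)). Qed.
Lemma tN2 x u z : t x (- u) z = - t x u z.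
Proof. case: Ht => [_ [H _]]; exact: (linN _ (H x z)). Qed.
Lemma tN3 x y u : t x y (- u) = - t x y u.
Proof. case: Ht => [_ [_ H]]; exact: (linN _ (H x y)). Qed.
End Tri.

Variable g : lmodType k.

Lemma pairE (u v : X g) : u.1 = v.1 -> u.2 = v.2 -> u = v.
Proof. by case: u v => [? ?] [? ?] /= -> ->. Qed.

Lemma fstD (u v : X g) : (u + v).1 = u.1 + v.1. Proof. by []. Qed.
Lemma sndD (u v : X g) : (u + v).2 = u.2 + v.2. Proof. by []. Qed.
Lemma fstN (u : X g) : (- u).1 = - u.1. Proof. by []. Qed.
Lemma sndN (u : X g) : (- u).2 = - u.2. Proof. by []. Qed.
Lemma fstZ a (u : X g) : (a *: u).1 = a * u.1. Proof. by []. Qed.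
Lemma sndZ a (u : X g) : (a *: u).2 = a *: u.2. Proof. by []. Qed.
Lemma fst0 : (0 : X g).1 = 0. Proof. by []. Qed.
Lemma snd0 : (0 : X g).2 = 0. Proof. by []. Qed.
Lemma fstS (I : Type) (s : seq I) (F : I -> X g) :
  (\sum_(i <- s) F i).1 = \sum_(i <- s) (F i).1.
Proof. exact: (big_morph fst (fun _ _ => erefl) erefl). Qed.
Lemma sndS (I : Type) (s : seq I) (F : I -> X g) :
  (\sum_(i <- s) F i).2 = \sum_(i <- s) (F i).2.
Proof. exact: (big_morph snd (fun _ _ => erefl) erefl). Qed.

Lemma unitX1 : (unitX g).1 = 1. Proof. by []. Qed.
Lemma unitX2 : (unitX g).2 = 0. Proof. by []. Qed.
Lemma inj1 (v : g) : (inj v).1 = 0. Proof. by []. Qed.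
Lemma inj2 (v : g) : (inj v).2 = v. Proof. by []. Qed.
Lemma inj0 : inj (0 : g) = 0. Proof. by []. Qed.
Lemma injL a (p q : g) : inj (a *: p + q) = a *: inj p + inj q.
Proof. by apply: pairE; rewrite /= ?scaler0 ?addr0. Qed.

Lemma Delta3E (w : X g) : Delta3 w =
  [:: (w, unitX g, unitX g); (unitX g, inj w.2, unitX g);
      (unitX g, unitX g, inj w.2); (unitX g, inj 0, inj w.2)].
Proof. by []. Qed.

Lemma teval_flatten (V : lmodType k) (beta : X g -> X g -> X g -> V) (I : Type)
  (s : seq I) (F : I -> seq (X g * X g * X g)) :
  teval beta (flatten [seq F i | i <- s]) = \sum_(i <- s) teval beta (F i).
Proof.
elim: s => [|a s IH] /=; first by rewrite /teval !big_nil.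
by rewrite big_cons -IH /teval big_cat.
Qed.

Variable br : g -> g -> g -> g.
Hypothesis Hbr : trilinear br.

Lemma fstT u v w : (T br u v w).1 = u.1 * v.1 * w.1. Proof. by []. Qed.
Lemma sndT u v w : (T br u v w).2 = (v.1 * w.1) *: u.2 + br u.2 v.2 w.2.
Proof. by []. Qed.
Lemma T0_1 v w : T br 0 v w = 0.
Proof. by apply: pairE; rewrite ?fstT ?sndT ?fst0 ?snd0 ?unitX1 ?unitX2 ?mul0r ?scaler0 ?(t0_1 Hbr) ?addr0. Qed.
Lemma T0_2 u w : T br u 0 w = 0.
Proof. by apply: pairE; rewrite ?fstT ?sndT ?fst0 ?snd0 ?unitX1 ?unitX2 ?(mul0r, mulr0) ?scale0r ?(t0_2 Hbr) ?addr0. Qed.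
Lemma T0_3 u v : T br u v 0 = 0.
Proof. by apply: pairE; rewrite ?fstT ?sndT ?fst0 ?snd0 ?unitX1 ?unitX2 ?(mul0r, mulr0) ?scale0r ?(t0_3 Hbr) ?addr0. Qed.
Lemma Tunit : T br (unitX g) (unitX g) (unitX g) = unitX g.
Proof. by apply: pairE; rewrite ?fstT ?sndT ?fst0 ?snd0 ?unitX1 ?unitX2 ?mulr1 ?scaler0 ?(t0_1 Hbr) ?addr0. Qed.

Lemma Lam1 (phi : g -> g -> g -> g) (u v w : X g) : (Lambda2 phi u v w).1 = 0. Proof. by []. Qed.
Lemma Lam2 (phi : g -> g -> g -> g) (u v w : X g) : (Lambda2 phi u v w).2 = phi u.2 v.2 w.2. Proof. by []. Qed.
Lemma LamE (phi : g -> g -> g -> g) (u v w : X g) : Lambda2 phi u v w = inj (phi u.2 v.2 w.2). Proof. by []. Qed.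

Lemma helper (V : zmodType) (a b c d e f g0 h i j : V) :
  b + d - f - h - j - e - g0 - i = 0 ->
  a + b + (c + d) - (a + e + (c + f) + (g0 + h + (i + j))) = 0.
Proof.
move=> H; apply/eqP; rewrite subr_eq0; apply/eqP.
rewrite (addrACA a b c d) (addrACA a e c f) -(addrA (a + c)); congr (_ + _).
move/eqP: H; rewrite !subr_eq add0r => /eqP ->.
rewrite -!addrA.
rewrite (addrCA g0 e) (addrCA i e); congr (_ + _).
rewrite (addrC h f) (addrCA j f) (addrCA g0 f) (addrCA i f); congr (_ + _).
rewrite (addrCA i g0); congr (_ + _).
by rewrite (addrC j h) addrCA.
Qed.

End Aux.

Arguments T : simpl never.
Arguments Lambda2 : simpl never.
Arguments inj : simpl never.
Arguments unitX : simpl never.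

Theorem mainTheorem9 (k : fieldType) (g : lmodType k) (br : g -> g -> g -> g) :
  is_3Lie br ->
  (* 3-Lie 2-cocycles go to TSD 2-cocycles *)
  (forall phi : g -> g -> g -> g,
     LieC2 phi ->
     (forall x y z w u : g, Lie_delta2 br phi x y z w u = 0) ->
     TSD_C2 br (Lambda2 phi) /\
     (forall x y z w u : X g, TSD_delta2 br (Lambda2 phi) x y z w u = 0)) /\
  (* 3-Lie 2-coboundaries go to TSD 2-coboundaries *)
  (forall f : g -> g,
     linear f ->
     exists F : X g -> X g,
       TSD_C1 F /\
       forall x y z : X g,
         Lambda2 (Lie_delta1 br f) x y z = TSD_delta1 br F x y z).
Proof.
case=> Hbr _ Hjac; split.
  move=> phi [Hphi _] Hcoc; split.
    split.
      split; last split.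
      - move=> v w a p q; rewrite !LamE.
        by rewrite -injL -(tZ1 Hphi) -(tD1 Hphi).
      - move=> v w a p q; rewrite !LamE.
        by rewrite -injL -(tZ2 Hphi) -(tD2 Hphi).
      - move=> v w a p q; rewrite !LamE.
        by rewrite -injL -(tZ3 Hphi) -(tD3 Hphi).
    move=> x y z V beta Hb.
    rewrite !Delta3E.
    move Eo: (unitX g) => o.
    move Ex: (inj x.2) => xh. move Ey: (inj y.2) => yh. move Ez: (inj z.2) => zh.
    move E0: (inj 0) => ze. move EL: (Lambda2 phi) => L. move ET: (T br) => Tb.
    rewrite /teval unlock /=.
    subst o xh yh zh ze L Tb.
    rewrite !LamE !inj2 !unitX2 ?(t0_1 Hphi) ?(t0_2 Hphi) ?(t0_3 Hphi) !inj0.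
    rewrite ?(t0_1 Hb) ?(t0_2 Hb) ?(t0_3 Hb) ?(T0_1 Hbr) ?(T0_2 Hbr) ?(T0_3 Hbr) ?(Tunit Hbr).
    by rewrite ?(t0_1 Hb) ?(t0_2 Hb) ?(t0_3 Hb) ?addr0 ?add0r.
  move=> x y z w u; rewrite /TSD_delta2 !Delta3E.
  apply: pairE.
    rewrite !fstD !fstN !fst0 fstS.
    under eq_bigr => p _ do rewrite fstS.
    under eq_bigr => p _ do under eq_bigr => q _ do rewrite !fstD.
    rewrite unlock /=.
    by rewrite !(mul0r, mulr0, addr0, add0r, subrr, oppr0).
  rewrite !sndD !sndN !snd0 sndS.
  under eq_bigr => p _ do rewrite sndS.
  under eq_bigr => p _ do under eq_bigr => q _ do rewrite !sndD.
  rewrite unlock /=.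
  rewrite !(mul0r, mulr0, mul1r, mulr1, scale0r, scale1r, scaler0, addr0, add0r,
     t0_1 Hbr, t0_2 Hbr, t0_3 Hbr, t0_1 Hphi, t0_2 Hphi, t0_3 Hphi).
  rewrite !(tD1 Hbr, tD2 Hbr, tD3 Hbr, tZ1 Hbr, tZ2 Hbr, tZ3 Hbr,
     tD1 Hphi, tD2 Hphi, tD3 Hphi, tZ1 Hphi, tZ2 Hphi, tZ3 Hphi).
  rewrite ?(mul0r, mulr0, mul1r, mulr1, scale0r, scale1r, scaler0, addr0, add0r,
     t0_1 Hbr, t0_2 Hbr, t0_3 Hbr, t0_1 Hphi, t0_2 Hphi, t0_3 Hphi).
  have HH := @helper g _ _ _ _ _ _ _ _ _ _ (Hcoc x.2 y.2 z.2 w.2 u.2). exact: HH.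
move=> f Hf; exists (fun w => inj (f w.2)); split.
  split.
    move=> a p q.
    change (inj (f (a *: p.2 + q.2)) = a *: inj (f p.2) + inj (f q.2)).
    by rewrite Hf injL.
  move=> w V beta Hb.
  rewrite !Delta3E /teval unlock /=.
  by rewrite ?inj2 ?unitX2 ?(lin0 Hf) ?inj0 ?(t0_1 Hb) ?(t0_2 Hb) ?(t0_3 Hb) ?addr0 ?add0r.
move=> x y z; rewrite /TSD_delta1; apply: pairE.
  by rewrite /= !(mul0r, mulr0, subr0).
rewrite /= /Lie_delta1 (linD _ _ Hf) (linZ _ _ Hf) !(mul0r, mulr0, scale0r, add0r).
by rewrite (addrC (_ *: f x.2)) opprD addrA addrK.
Qed.
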